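(* Let $f,g\in\mathbb B(X)$ with $f$ modular in $g$, let $\mathbf u$ be an assignment over $X$ and $x\in\mathrm{dep}(g)$. Then $$\mathrm{mscs}^{\mathbf u}_x(f)=\mathrm{mscs}^{\mathbf u}_x(g)+\mathrm{mscs}^{\mathbf u}_g(f).$$
   Context: $X$ is a fixed finite set of variables; $\mathbb B(X)$ is the set of Boolean functions $\{0,1\}^X\to\{0,1\}$. For $\mathbf u\in\{0,1\}^X$ and $S\subseteq X$, $\mathbf u^{\oplus S}$ flips the values of the variables in $S$. $f_{x/c}$ is $f$ with $x$ fixed to $c$; $\mathrm{dep}(f)=\{x:f_{x/1}\ne f_{x/0}\}$; $f[x/s]=sf_{x/1}\lor\overline sf_{x/0}$; $\mathrm D_xf=f_{x/1}\oplus f_{x/0}$. Modularity: $f$ is modular in $g$ if $g$ is not constant and there are $\ell\in\mathbb B(X)$, $z\in X$ with $\mathrm{dep}(\ell)\cap\mathrm{dep}(g)=\emptyset$ and $f=\ell[z/g]$; then $f_{g/1}:=\ell_{z/1}$, $f_{g/0}:=\ell_{z/0}$ (well defined) and $\mathrm D_gf:=f_{g/1}\oplus f_{g/0}$. $\mathrm{mscs}^{\mathbf u}_x(f)$ is the minimum of $|S|$ over $S\subseteq X\setminus\{x\}$ with $(\mathrm D_xf)(\mathbf u^{\oplus S})=1$ (equivalently $f(\mathbf u^{\oplus S})\ne f(\mathbf u^{\oplus(S\cup\{x\})})$), and $\mathrm{mscs}^{\mathbf u}_g(f)$ is the minimum of $|S|$ over $S\subseteq X$ with $(\mathrm D_gf)(\mathbf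 u^{\oplus S})=1$; each is $\infty$ if no such set exists (with $\infty+k=\infty$). *)

(* Defs.v *)
From mathcomp Require Import all_boot.
Set Implicit Arguments. Unset Strict Implicit. Unset Printing Implicit Defensive.

Section BoolFun.
Variable X : finType.

Definition assignment := {ffun X -> bool}.
Definition boolfun := assignment -> bool.

Definition flip (u : assignment) (S : {set X}) : assignment :=
  [ffun y => if y \in S then ~~ u y else u y].

Definition setvar (u : assignment) (x : X) (c : bool) : assignment :=
  [ffun y => if y == x then c else u y].

Definition restr (f : boolfun) (x : X) (c : bool) : boolfun :=
  fun u => f (setvar u x c).

Definition dep (f : boolfun) : {set X} :=
  [set x | [exists u : assignment, restr f x true u != restr f x false u]].

Definition subst (f : boolfun) (x : X) (s : boolfun) : boolfun :=
  fun u => (s u && restr f x true u) || (~~ s u && restr f x false u).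

Definition deriv (f : boolfun) (x : X) : boolfun :=
  fun u => restr f x true u (+) restr f x false u.

Definition nonconstant (g : boolfun) : Prop := exists u v, g u != g v.

Definition modular_via (f g l : boolfun) (z : X) : Prop :=
  nonconstant g /\ [disjoint dep l & dep g] /\ f = subst l z g.

Definition modular (f g : boolfun) : Prop := exists l z, modular_via f g l z.

(* f_{g/c} := l_{z/c},  D_g f := f_{g/1} xor f_{g/0}, relative to the witness (l, z) *)
Definition restr_mod (l : boolfun) (z : X) (c : bool) : boolfun := restr l z c.
Definition deriv_mod (l : boolfun) (z : X) : boolfun :=
  fun u => restr_mod l z true u (+) restr_mod l z false u.

(* minimum of |S| over S satisfying P, None standing for infinity *)
Definition minsize (P : pred {set X}) : option nat :=
  if [exists S : {set X}, P S] then Some (\big[minn/#|X|]_(S : {set X} | P S) #|S|)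
  else None.

Definition oadd (a b : option nat) : option nat :=
  match a, b with Some m, Some n => Some (m + n) | _, _ => None end.

Definition mscs_var (u : assignment) (x : X) (f : boolfun) : option nat :=
  minsize (fun S => (x \notin S) && deriv f x (flip u S)).

(* mscs^u_g(f), where (l,z) witnesses modularity of f in g *)
Definition mscs_mod (u : assignment) (l : boolfun) (z : X) : option nat :=
  minsize (fun S => deriv_mod l z (flip u S)).

End BoolFun.

(* Main.v *)
Require Import Defs.
From mathcomp Require Import all_boot.
Set Implicit Arguments. Unset Strict Implicit. Unset Printing Implicit Defensive.

Section Aux.
Variable X : finType.

Lemma minsize_some (P : pred {set X}) S1 : P S1 ->
  exists S0, [/\ P S0, minsize P = Some #|S0| & forall S, P S -> #|S0| <= #|S|].
Proof.
move=> PS1.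
case: (arg_minnP (fun S : {set X} => #|S|) PS1) => S0 PS0 minS0.
exists S0; split => //.
rewrite /minsize; have -> : [exists S, P S] by apply/existsP; exists S0.
congr Some; apply/eqP; rewrite eqn_leq; apply/andP; split.

  have : S0 \in index_enum (finset_set_of__canonical__fintype_Finite X) by rewrite mem_index_enum.
  elim: (index_enum _) => [//|a r IHr]; rewrite inE big_cons.
  case/orP=> [/eqP<-|ar].
    by rewrite PS0 /= geq_minl.
  case: ifP => _; last by apply: IHr.
  by apply: leq_trans (geq_minr _ _) (IHr ar).
apply: (big_ind (fun v => #|S0| <= v)).
- exact: max_card.
- by move=> a b Ha Hb; rewrite leq_min Ha Hb.
- by move=> S PS; apply: minS0.
Qed.

Lemma minsize_none (P : pred {set X}) : (forall S, ~~ P S) -> minsize P = None.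
Proof.
move=> H; rewrite /minsize; case: existsP => // [[S PS]].
by move: (H S); rewrite PS.
Qed.

Lemma minsize_split (Pf Pg Pm : pred {set X}) :
  (forall S, Pf S -> exists S1 S2, [/\ Pg S1, Pm S2 & #|S1| + #|S2| <= #|S|]) ->
  (forall S1 S2, Pg S1 -> Pm S2 -> exists S, Pf S /\ #|S| <= #|S1| + #|S2|) ->
  minsize Pf = oadd (minsize Pg) (minsize Pm).
Proof.
move=> H1 H2.
case: (boolP [exists S, Pf S]) => [/existsP[S PS]|/existsPn Hn].
  have [S0 [PS0 -> m0]] := minsize_some PS.
  have [S1 [S2 [P1 P2 le12]]] := H1 _ PS0.
  have [T1 [PT1 -> m1]] := minsize_some P1.
  have [T2 [PT2 -> m2]] := minsize_some P2.
  have [S' [PS' leS']] := H2 _ _ PT1 PT2.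
  congr Some; apply/eqP; rewrite eqn_leq; apply/andP; split.
    by apply: leq_trans (m0 _ PS') leS'.
  apply: leq_trans le12; exact: leq_add (m1 _ P1) (m2 _ P2).
rewrite minsize_none //.
case: (boolP [exists S, Pg S]) => [/existsP[S1 P1]|/existsPn Hg].
  case: (boolP [exists S, Pm S]) => [/existsP[S2 P2]|/existsPn Hm].
    have [S [PS _]] := H2 _ _ P1 P2; by move: (Hn S); rewrite PS.
  by rewrite (minsize_none Hm); case: (minsize Pg).
by rewrite (minsize_none Hg).
Qed.

Lemma nodep (h : boolfun X) y : y \notin dep h ->
  forall t, h (setvar t y true) = h (setvar t y false).
Proof.
move=> ynd t; apply/eqP; apply: contraNT ynd => ne; rewrite inE; apply/existsP; exists t; exact ne.
Qed.

Lemma indep_set (h : boolfun X) : forall n (A : {set X}), #|A| <= n ->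
  [disjoint A & dep h] -> forall v w : assignment X,
  (forall y, y \notin A -> v y = w y) -> h v = h w.
Proof.
elim=> [|n IH] A cA dA v w agr.
  have A0 : A = set0 by apply/eqP; rewrite -cards_eq0 -leqn0.
  by congr h; apply/ffunP => y; apply: agr; rewrite A0 inE.
case: (set_0Vmem A) => [A0|[y yA]].
  by congr h; apply/ffunP => y; apply: agr; rewrite A0 inE.
have ynd : y \notin dep h by rewrite (disjointFr dA yA).
have hv : h v = h (setvar v y (w y)).
  have E := nodep ynd v.
  have Ev : v = setvar v y (v y).
    by apply/ffunP => t; rewrite ffunE; case: eqP => // ->.
  rewrite {1}Ev; case: (v y); case: (w y) => //; by rewrite E.
rewrite hv; apply: (IH (A :\ y)).
- by rewrite (cardsD1 y A) yA in cA.
- by apply: disjointWl dA; apply: subD1set.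
- move=> t; rewrite !inE negb_and negbK ffunE => /orP[/eqP->|tA]; first by rewrite eqxx.
  by case: eqP => [->|_]; last exact: agr.
Qed.

Lemma indep (h : boolfun X) (D : {set X}) (v w : assignment X) : dep h \subset D ->
  (forall y, y \in D -> v y = w y) -> h v = h w.
Proof.
move=> sD agr; apply: (@indep_set h #|~: D| (~: D)) => //.
  rewrite disjoint_sym disjoint_subset; apply: subset_trans sD _; by apply/subsetP => y; rewrite !inE negbK.
by move=> y; rewrite inE negbK; apply: agr.
Qed.

End Aux.

Theorem mainTheorem19 (X : finType) (f g l : boolfun X) (z : X)
    (u : assignment X) (x : X) :
  modular_via f g l z ->
  x \in dep g ->
  mscs_var u x f = oadd (mscs_var u x g) (mscs_mod u l z).
Proof.
move=> [_ [dis ->]] xg.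
have xl : x \notin dep l by rewrite (disjointFl dis xg).
have Lx : forall c b w, restr l z c (setvar w x b) = restr l z c w.
  move=> c b w; rewrite /restr.
  case: (eqVneq x z) => [->|nxz].
    by congr l; apply/ffunP => t; rewrite !ffunE; case: eqP.
  have -> : setvar (setvar w x b) z c = setvar (setvar w z c) x b.
    apply/ffunP => t; rewrite !ffunE; case: eqP => [->|]; last by [].
    by rewrite eq_sym (negbTE nxz).
  have E := nodep xl (setvar w z c).
  have Ev : setvar w z c = setvar (setvar w z c) x (setvar w z c x).
    by apply/ffunP => t; rewrite [RHS]ffunE; case: eqP => // ->.
  rewrite [in RHS]Ev; case: b; case: (setvar w z c x) => //; by rewrite E.
have key : forall v, deriv (subst l z g) x v = deriv g x v && deriv_mod l z v.
  move=> v; rewrite /deriv /deriv_mod /restr_mod.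
  rewrite /restr /subst -!/(restr l z _ _) !Lx -/(restr g x _ _) -/(restr g x _ _).
  by case: (restr g x true v); case: (restr g x false v);
     case: (restr l z true v); case: (restr l z false v).
have Dg : forall v w : assignment X, (forall y, y \in dep g -> v y = w y) -> deriv g x v = deriv g x w.
  move=> v w agr; rewrite /deriv /restr.
  by congr (_ (+) _); apply: (indep (subxx _)) => y yD; rewrite !ffunE; case: eqP => // _; apply: agr.
have Dm : forall v w : assignment X, (forall y, y \in dep l -> v y = w y) -> deriv_mod l z v = deriv_mod l z w.
  move=> v w agr; rewrite /deriv_mod /restr_mod /restr.
  by congr (_ (+) _); apply: (indep (subxx _)) => y yD; rewrite !ffunE; case: eqP => // _; apply: agr.
have flipag : forall S T D : {set X}, (forall y, y \in D -> (y \in S) = (y \in T)) ->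
    forall y, y \in D -> flip u S y = flip u T y.
  by move=> S T D H y yD; rewrite !ffunE H.
apply: minsize_split.
- move=> S /andP[xS]; rewrite key => /andP[dg dm].
  exists (S :&: dep g), (S :&: dep l); split.
  + rewrite inE negb_and xS /=; rewrite -(Dg (flip u S)) //.
    by apply: flipag => y yD; rewrite inE yD andbT.
  + rewrite -(Dm (flip u S)) //.
    by apply: flipag => y yD; rewrite inE yD andbT.
  + rewrite -cardsUI.
    have -> : S :&: dep g :&: (S :&: dep l) = set0.
      apply/setP => y; rewrite in_set0 !in_setI.
      by case yl: (y \in dep l); rewrite ?andbF // (disjointFr dis yl) !andbF.
    by rewrite cards0 addn0 subset_leq_card // -setIUr subsetIl.
- move=> S1 S2 /andP[xS1 d1] d2.
  exists ((S1 :&: dep g) :|: (S2 :&: dep l)); split.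
    rewrite in_setU !in_setI (negbTE xS1) (negbTE xl) !andbF /= key.
    rewrite -(Dg (flip u S1)); last first.
      apply: flipag => y yD; rewrite in_setU !in_setI yD andbT.
      have -> : (y \in dep l) = false by apply: (disjointFl dis yD).
      by rewrite andbF orbF.
    rewrite d1 -(Dm (flip u S2)) //.
    apply: flipag => y yD; rewrite in_setU !in_setI yD andbT.
    have -> : (y \in dep g) = false by apply: (disjointFr dis yD).
    by rewrite andbF.
  apply: leq_trans (leq_card_setU _ _) _.
  by apply: leq_add; apply: subset_leq_card; apply: subsetIl.
Qed.
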